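(* Let $\nu$ be a non-degenerate probability measure on $\mathbb{R}$ with support bounded from above and suppose $A(\nu)=\sup\operatorname{supp}(\nu)<0$. For $\theta\in\Theta=\left(-\infty,\frac{1}{A(\nu)}\right)\cup(0,\infty)$ let $M(\theta)=\int\frac{1}{1-\theta x}\nu(dx)$, $P_\theta(dx)=\frac{1}{M(\theta)(1-\theta x)}\nu(dx)$ and $$k(\theta)=\int x\,P_\theta(dx)=\frac{M(\theta)-1}{\theta M(\theta)}.$$ Then $k$ is strictly increasing on $(0,\infty)$ and on $\left(-\infty,\frac{1}{A(\nu)}\right)$. *)

(* Defs.v *)
From HB Require Import structures.
From mathcomp Require Import all_boot all_order all_algebra.
From mathcomp Require Import all_classical all_reals all_analysis.
Set Implicit Arguments. Unset Strict Implicit. Unset Printing Implicit Defensive.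
Import Order.TTheory GRing.Theory Num.Theory.
Local Open Scope classical_set_scope.
Local Open Scope ring_scope.

Definition msupport (R : realType) (nu : {measure set R -> \bar R}) : set R :=
  [set x | forall e : R, 0 < e -> (0%E < nu `]x - e, x + e[%classic)%O].

Definition non_dirac (R : realType) (nu : {measure set R -> \bar R}) : Prop :=
  ~ (exists a : R, nu [set a] = 1%E).

Definition Mfun (R : realType) (nu : {measure set R -> \bar R}) (theta : R) : R :=
  \int[nu]_(x in [set: R]) (1 - theta * x)^-1.

(* k(theta) = \int x P_theta(dx), where P_theta(dx) = nu(dx) / (M(theta)(1 - theta x)),
   i.e. k(theta) = (1/M(theta)) \int x/(1 - theta x) nu(dx). *)
Definition kfun (R : realType) (nu : {measure set R -> \bar R}) (theta : R) : R :=
  (Mfun nu theta)^-1 * \int[nu]_(x in [set: R]) (x / (1 - theta * x)).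

(* Main.v *)
Require Import Defs.
From HB Require Import structures.
From mathcomp Require Import all_boot all_order all_algebra.
From mathcomp Require Import all_classical all_reals all_analysis.
From mathcomp Require Import ring lra.
From mathcomp Require Import measurable_realfun.
Import Order.TTheory GRing.Theory Num.Theory.
Local Open Scope classical_set_scope.
Local Open Scope ring_scope.

Lemma measurable_inv (R : realType) : measurable_fun [set: R] (@GRing.inv R).
Proof.
have -> : [set: R] = [set x | x != 0] `|` [set 0].
  apply/seteqP; split => x // _; case: (eqVneq x 0) => [->|h]; [right|left] => //.
apply/measurable_funU => //.
- exact: measurable_realfun.open_measurable (@open_neq R 0).
split; last exact: measurable_fun_set1.
apply: measurable_realfun.open_continuous_measurable_fun; first exact: open_neq.
move=> x; rewrite inE /= => x0; exact: inv_continuous.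
Qed.

Section Supp.
Context (R : realType) (nu : probability R R) (A : R).
Hypothesis ns : forall y, A < y ->
  exists2 e : R, 0 < e & nu `]y - e, y + e[%classic = 0%E.

Lemma seg_null a b : A < a -> nu `[a, b]%classic = 0%E.
Proof.
move=> Aa.
have [ba|ab] := ltP b a.
  by rewrite set_itv_ge ?measure0 // bnd_simp -ltNge.
apply: contrapT => hb.
pose W := [set z | a <= z /\ nu `[a, z]%classic = 0%E].
have Wub : ubound W b.
  move=> z [az hz]; rewrite leNgt; apply/negP => bz; apply: hb.
  apply: (subset_measure0 _ _ _ hz) => // x /=; rewrite !in_itv /=.
  by move=> /andP[-> xb] /=; exact: le_trans xb (ltW bz).
have Wa : W a.
  split => //; have [e e0 he] := ns _ Aa.
  apply: (subset_measure0 _ _ _ he) => // x /=; rewrite !in_itv /=.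
  move=> /andP[ax xa]; have -> : x = a by apply/eqP; rewrite eq_le ax xa.
  apply/andP; split; lra.
have hsW : has_sup W by split; [exists a | exists b].
have ac : a <= sup W := sup_upper_bound hsW Wa.
have [e e0 he] := ns _ (lt_le_trans Aa ac).
have [z Wz cz] := sup_adherent e0 hsW.
have : W (sup W + e / 2).
  split; first lra.
  apply/eqP; rewrite -measure_le0.
  apply: (@le_trans _ _ (nu (`[a, z] `|` `]sup W - e, sup W + e[))%classic).
    apply: le_measure; rewrite ?inE //; first exact: measurableU.
    move=> x /=; rewrite !in_itv /= => /andP[ax xc].
    have [xz|zx] := leP x z; [left|right] => /=.
      by rewrite ax.
    apply/andP; split; lra.
  apply: le_trans (measureU2 _ _ _) _ => //.
  case: Wz => _ /eqP; rewrite -measure_le0 => h1.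
  rewrite -(adde0 0%E); apply: leeD; first exact: h1.
  by move/eqP: he; rewrite -measure_le0.
move=> /(sup_upper_bound hsW); lra.
Qed.

Lemma tail_null : nu `]A, +oo[%classic = 0%E.
Proof.
apply/negligibleP => //.
apply: (@negligibleS _ _ _ _ (\bigcup_n `[A + n.+1%:R^-1, A + n.+1%:R]%classic)).
  move=> x /=; rewrite in_itv /= andbT => Ax.
  have xA0 : 0 < x - A by lra.
  have hi : 0 < (x - A)^-1 by rewrite invr_gt0.
  have hxi : (x - A) * (x - A)^-1 = 1 by rewrite mulfV // gt_eqF.
  set y := x - A + (x - A)^-1.
  have y0 : 0 <= y by rewrite /y; lra.
  have hy : y < (Num.trunc y).+1%:R by rewrite -truncn_lt_nat.
  exists (Num.trunc y) => //=; rewrite in_itv /=.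
  set N := (Num.trunc y).+1%:R in hy *; clearbody N.
  have N0 : 0 < N by lra.
  have hN : N * N^-1 = 1 by rewrite mulfV // gt_eqF.
  have hNi : 0 < N^-1 by rewrite invr_gt0.
  apply/andP; split; last by rewrite /y in hy; lra.
  rewrite /y in hy.
  have h2 : 0 < (x - A) * (N - (x - A + (x - A)^-1)) by apply: mulr_gt0 => //; lra.
  rewrite mulrBr mulrDr hxi in h2.
  have h1 : 1 < (x - A) * N by nra.
  have h3 : 0 < N^-1 * ((x - A) * N - 1) by apply: mulr_gt0 => //; lra.
  have e3 : N^-1 * ((x - A) * N - 1) = (x - A) - N^-1.
    by field; rewrite gt_eqF.
  rewrite e3 in h3; lra.
apply: negligible_bigcup => n; apply/negligibleP => //.
apply: seg_null; rewrite ltrDl invr_gt0; exact: ltr0Sn.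
Qed.
End Supp.

Section Main.
Context (R : realType) (nu : probability R R) (A : R).
Hypothesis A0 : A < 0.
Hypothesis tail0 : nu `]A, +oo[%classic = 0%E.
Hypothesis hnd : non_dirac nu.

Let D := `]-oo, A]%classic : set R.

Let mD : measurable D. Proof. exact: measurable_itv. Qed.

Let DN : [set: R] = D `|` `]A, +oo[%classic.
Proof.
apply/seteqP; split => x // _ /=; rewrite !in_itv /=.
by case: (leP x A) => h; [left|right].
Qed.

Lemma int_T (f : R -> R) : measurable_fun setT f ->
  (\int[nu]_(x in [set: R]) (f x)%:E = \int[nu]_(x in D) (f x)%:E)%E.
Proof.
move=> mf; rewrite DN integral_setU //; last 2 first.
- by rewrite -DN; exact/measurable_EFinP.
- apply/disj_setPS => x []; rewrite /D /= !in_itv /= andbT => h1 h2; lra.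
rewrite (@null_set_integral _ _ _ nu `]A, +oo[%classic) ?adde0 //.
apply: measurable_funTS; exact/measurable_EFinP.
Qed.

Lemma RT (f : R -> R) : measurable_fun setT f ->
  Rintegral nu [set: R] f = Rintegral nu D f.
Proof. by move=> mf; rewrite /Rintegral int_T. Qed.

Definition bnd (f : R -> R) := exists M, forall x, D x -> `|f x| <= M.

Lemma intD f : measurable_fun setT f -> bnd f -> nu.-integrable D (EFin \o f).
Proof.
move=> mf [M hM]; apply: measurable_bounded_integrable => //.
- by apply: (le_lt_trans (probability_le1 _ mD)); rewrite ltry.
- exact: measurable_funS mf.
exists M; split; first exact: num_real.
by move=> y My x Dx; rewrite /= (le_trans (hM x Dx)) // ltW.
Qed.

Lemma pos_int f c : measurable_fun setT f -> bnd f ->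
  (forall x, D x -> 0 <= f x) -> (forall x, D x -> x != c -> 0 < f x) ->
  0 < Rintegral nu D f.
Proof.
move=> mf bf f0 fp.
have iD := intD f mf bf.
have fin := integrable_fin_num mD iD.
rewrite lt_def Rintegral_ge0 // andbT; apply/negP => /eqP h0.
have I0 : (\int[nu]_(x in D) (f x)%:E = 0)%E.
  by move: h0; rewrite /Rintegral => h0; rewrite -(fineK fin) /= h0.
have : (\int[nu]_(x in D) `|(EFin \o f) x| = 0)%E.
  rewrite -I0; apply: eq_integral => x; rewrite inE => Dx.
  by rewrite /= ger0_norm // f0.
move/(ae_eq_integral_abs nu mD (measurable_funTS _)).
move=> /(_ _) [].
  exact/measurable_EFinP.
move=> N' [mN' N0 sub].
apply: hnd; exists c.
apply/eqP; rewrite eq_le probability_le1 //=.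
rewrite -(probability_setT nu).
have mc : measurable [set c] by [].
apply: (@le_trans _ _ (nu ([set c] `|` N' `|` `]A, +oo[%classic))).
  apply: le_measure; rewrite ?inE //; first by apply: measurableU => //; exact: measurableU.
  move=> x _; have [->|xc] := eqVneq x c; first by left; left.
  have [xA|Ax] := leP x A; last by right => /=; rewrite in_itv /= Ax.
  left; right; apply: sub => /= h.
  have Dx : D x by rewrite /D /= in_itv /= xA.
  have := h Dx => /= /eqP; rewrite eqe => /eqP fx0.
  by move: (fp x Dx xc); rewrite fx0 ltxx.
apply: le_trans (measureU2 _ _ _) _ => //; first exact: measurableU.
have tl : (nu `]A, +oo[%classic <= 0)%E by rewrite tail0.
apply: le_trans (leeD (lexx _) tl) _; rewrite adde0.
apply: le_trans (measureU2 _ _ _) _ => //.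
have tN : (nu N' <= 0)%E by rewrite N0.
by apply: le_trans (leeD (lexx _) tN) _; rewrite adde0.
Qed.

Lemma DP x : D x <-> x <= A.
Proof. by rewrite /D /= in_itv. Qed.

Definition w (th x : R) := (1 - th * x)^-1.

Lemma mw (th : R) : measurable_fun setT (w th).
Proof.
apply: (measurableT_comp (measurable_inv R)).
apply: measurable_funB => //; exact: measurable_funM.
Qed.

Lemma mxw (th : R) : measurable_fun setT (fun x : R => x * w th x).
Proof. by apply: measurable_funM => //; exact: mw. Qed.

Lemma mF (th al be : R) : measurable_fun setT (fun x : R => al * (x * w th x) + be * w th x).
Proof.
apply: measurable_funD; apply: measurable_funM => //; [exact: mxw|exact: mw].
Qed.

Definition good (th sg : R) := (sg = 1 \/ sg = -1) /\ exists d, 0 < d /\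
  exists K, forall x, x <= A -> d <= sg * (1 - th * x) /\ `|x| <= K * (sg * (1 - th * x)).

Lemma bndD f g : bnd f -> bnd g -> bnd (fun x => f x + g x).
Proof.
move=> [M hM] [N hN]; exists (M + N) => x Dx.
by apply: le_trans (ler_normD _ _) _; apply: lerD; [exact: hM|exact: hN].
Qed.

Lemma bndZ (c : R) f : bnd f -> bnd (fun x => c * f x).
Proof.
move=> [M hM]; exists (`|c| * M) => x Dx.
by rewrite normrM; apply: ler_wpM2l => //; exact: hM.
Qed.

Lemma bndM f g : bnd f -> bnd g -> bnd (fun x => f x * g x).
Proof.
move=> [M hM] [N hN]; exists (M * N) => x Dx.
rewrite normrM; apply: ler_pM => //; [exact: hM|exact: hN].
Qed.

Section good.
Variables (th sg : R).
Hypothesis hg : good th sg.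

Lemma sgsg : sg * sg = 1.
Proof. by case: hg => -[] -> _; rewrite ?mulrNN mulr1. Qed.

Lemma good_pos x : D x -> 0 < sg * (1 - th * x).
Proof.
move=> /DP xA; case: hg => _ [d [d0 [K hK]]].
by apply: lt_le_trans d0 _; case: (hK x xA).
Qed.

Lemma normu x : D x -> `|1 - th * x| = sg * (1 - th * x).
Proof.
move=> Dx; rewrite -(ger0_norm (ltW (good_pos _ Dx))) normrM.
by case: hg => -[] -> _; rewrite ?normrN normr1 mul1r.
Qed.

Lemma sgw x : D x -> sg * w th x = (sg * (1 - th * x))^-1.
Proof.
move=> Dx; rewrite /w invfM; congr (_ * _).
by case: hg => -[] -> _; rewrite ?invrN invr1.
Qed.

Lemma bnd_w : bnd (w th).
Proof.
case: hg => _ [d [d0 [K hK]]]; exists d^-1 => x Dx.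
rewrite /w normfV normu //.
rewrite lef_pV2 ?posrE //; first by case: (hK x (proj1 (DP x) Dx)).
exact: good_pos.
Qed.

Lemma bnd_xw : bnd (fun x : R => x * w th x).
Proof.
case: hg => _ [d [d0 [K hK]]]; exists K => x Dx.
rewrite /w normrM normfV normu // ler_pdivrMr; last exact: good_pos.
by case: (hK x (proj1 (DP x) Dx)).
Qed.

Lemma bnd_F (al be : R) : bnd (fun x : R => al * (x * w th x) + be * w th x).
Proof. by apply: bndD; apply: bndZ; [exact: bnd_xw|exact: bnd_w]. Qed.

Definition mm := Rintegral nu D (w th).
Definition nn := Rintegral nu D (fun x : R => x * w th x).

Lemma int_F (al be : R) :
  Rintegral nu D (fun x : R => al * (x * w th x) + be * w th x) = al * nn + be * mm.
Proof.
rewrite RintegralD //; last 2 first.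
- apply: intD; last exact: bndZ bnd_xw.
  by apply: measurable_funM => //; exact: mxw.
- apply: intD; last exact: bndZ bnd_w.
  by apply: measurable_funM => //; exact: mw.
rewrite !RintegralZl //.
- exact: intD (mw th) bnd_w.
- exact: intD (mxw th) bnd_xw.
Qed.

Lemma kfunE : kfun nu th = mm^-1 * nn.
Proof.
rewrite /kfun /Mfun (RT (w th) (mw th)).
by rewrite (RT (fun x : R => x * w th x) (mxw th)).
Qed.

End good.
Arguments sgsg {th sg}. Arguments good_pos {th sg}. Arguments normu {th sg}.
Arguments sgw {th sg}. Arguments bnd_w {th sg}. Arguments bnd_xw {th sg}.
Arguments bnd_F {th sg}. Arguments int_F {th sg}. Arguments kfunE : clear implicits.

Lemma pos_mm th sg : good th sg -> 0 < sg * mm th.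
Proof.
move=> g; rewrite /mm -RintegralZl //; last exact: intD _ (mw th) (bnd_w g).
apply: (pos_int _ 0).
- by apply: measurable_funM => //; exact: mw.
- exact: bndZ (bnd_w g).
- by move=> x Dx; rewrite (sgw g) // invr_ge0 ltW // (good_pos g).
- by move=> x Dx _; rewrite (sgw g) // invr_gt0 (good_pos g).
Qed.

Lemma kmono s t sg : good s sg -> good t sg -> s < t -> kfun nu s < kfun nu t.
Proof.
move=> gs gt st.
rewrite (kfunE s) (kfunE t).
have ha := pos_mm _ _ gs; have hm2 := pos_mm _ _ gt.
have s2 := sgsg gs.
set a := mm s in ha *; set b := nn s; set m2 := mm t in hm2 *; set n2 := nn t.
have hP : 0 < a - t * b.
  have -> : a - t * b = - t * b + 1 * a by ring.
  rewrite -(int_F gs); apply: (pos_int _ 0); first exact: mF.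
    exact: (bnd_F gs (-t) 1).
  - move=> x Dx.
    have -> : -t * (x * w s x) + 1 * w s x = (sg * (1 - t * x)) * (sg * w s x).
      by apply: (@eq_trans _ _ ((sg * sg) * ((1 - t * x) * w s x))); [rewrite s2; ring|ring].
    rewrite (sgw gs x Dx); apply: ltW; apply: mulr_gt0; first exact: (good_pos gt).
    by rewrite invr_gt0; exact: (good_pos gs).
  - move=> x Dx _.
    have -> : -t * (x * w s x) + 1 * w s x = (sg * (1 - t * x)) * (sg * w s x).
      by apply: (@eq_trans _ _ ((sg * sg) * ((1 - t * x) * w s x))); [rewrite s2; ring|ring].
    rewrite (sgw gs x Dx); apply: mulr_gt0; first exact: (good_pos gt).
    by rewrite invr_gt0; exact: (good_pos gs).
have a0 : a != 0 by apply: contraTneq ha => ->; rewrite mulr0 ltxx.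
have m20 : m2 != 0 by apply: contraTneq hm2 => ->; rewrite mulr0 ltxx.
have u0 x : D x -> 1 - s * x != 0.
  by move=> Dx; apply: contraTneq (good_pos gs x Dx) => ->; rewrite mulr0 ltxx.
have v0 x : D x -> 1 - t * x != 0.
  by move=> Dx; apply: contraTneq (good_pos gt x Dx) => ->; rewrite mulr0 ltxx.
pose Fs := fun x : R => a * (x * w s x) + (- b) * w s x.
pose Ft := fun x : R => a * (x * w t x) + (- b) * w t x.
have mFs : measurable_fun setT Fs by exact: mF.
have mFt : measurable_fun setT Ft by exact: mF.
have bFs : bnd Fs by exact: (bnd_F gs a (-b)).
have bFt : bnd Ft by exact: (bnd_F gt a (-b)).
have eq x : D x -> Fs x * Ft x = (a * x - b) ^+ 2 * ((sg * w s x) * (sg * w t x)).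
  move=> Dx; apply: (@eq_trans _ _ ((a * x - b) ^+ 2 * (sg * sg) * (w s x * w t x))).
    by rewrite s2 /Fs /Ft; ring.
  by ring.
have hQ : 0 < Rintegral nu D (fun x => Fs x * Ft x).
  apply: (pos_int _ (b / a)).
  - exact: measurable_funM.
  - exact: bndM.
  - move=> x Dx; rewrite eq // (sgw gs x Dx) (sgw gt x Dx).
    apply: mulr_ge0; first exact: sqr_ge0.
    by apply: mulr_ge0; rewrite invr_ge0 ltW //; [exact: (good_pos gs)|exact: (good_pos gt)].
  - move=> x Dx xba; rewrite eq // (sgw gs x Dx) (sgw gt x Dx).
    apply: mulr_gt0; last first.
      by apply: mulr_gt0; rewrite invr_gt0 //; [exact: (good_pos gs)|exact: (good_pos gt)].
    rewrite lt_def sqr_ge0 andbT sqrf_eq0.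
    apply: contra xba => /eqP h; apply/eqP.
    by apply: (mulfI a0); rewrite mulrCA mulfV // mulr1; apply/eqP; rewrite -subr_eq0 h.
set Q := Rintegral nu D _ in hQ.
have hid : Rintegral nu D (fun x => (a - t * b) * Ft x) =
    Rintegral nu D (fun x => (a - s * b) * Fs x + (t - s) * (Fs x * Ft x)).
  apply: eq_Rintegral => x; rewrite inE => Dx.
  have := u0 x Dx; have := v0 x Dx; rewrite /Fs /Ft /w => hv hu.
  by field; rewrite hu hv.
have IFs : Rintegral nu D Fs = a * b + (- b) * a by exact: (int_F gs a (-b)).
have IFt : Rintegral nu D Ft = a * n2 + (- b) * m2 by exact: (int_F gt a (-b)).
clearbody Fs Ft.
rewrite RintegralZl // in hid; last exact: intD _ mFt bFt.
rewrite RintegralD // in hid; last 2 first.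
- exact: intD _ (measurable_funM (measurable_cst _) mFs) (bndZ _ _ bFs).
- exact: intD _ (measurable_funM (measurable_cst _) (measurable_funM mFs mFt))
    (bndZ _ _ (bndM _ _ bFs bFt)).
rewrite !RintegralZl // in hid; try solve [exact: intD _ mFs bFs |
  exact: intD _ (measurable_funM mFs mFt) (bndM _ _ bFs bFt)].
rewrite IFs IFt -/Q in hid.
have key : 0 < a * n2 - b * m2.
  rewrite -(pmulr_rgt0 _ hP).
  have -> : (a - t * b) * (a * n2 - b * m2) = (t - s) * Q.
    have e0 : (a - s * b) * (a * b + - b * a) = 0 by ring.
    by rewrite e0 add0r in hid; rewrite -hid; ring.
  by apply: mulr_gt0; rewrite // subr_gt0.
have am : 0 < a * m2.
  have e : a * m2 = (sg * a) * (sg * m2) by rewrite mulrACA s2 mul1r.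
  by rewrite e mulr_gt0.
rewrite -subr_gt0.
have -> : m2^-1 * n2 - a^-1 * b = (a * n2 - b * m2) / (a * m2) by field; rewrite ?a0 ?m20.
by apply: divr_gt0.
Qed.

End Main.


Lemma good_p (R : realType) (A th : R) : A < 0 -> 0 < th -> good R A th 1.
Proof.
move=> A0 th0; split; first by left.
exists 1; split => //; exists th^-1 => x xA; split.
  by rewrite mul1r; nra.
have hi : th * th^-1 = 1 by rewrite mulfV // gt_eqF.
have hi0 : 0 < th^-1 by rewrite invr_gt0.
rewrite ler0_norm; last lra.
have e : th^-1 * (1 * (1 - th * x)) = th^-1 - x by field; rewrite gt_eqF.
rewrite e; lra.
Qed.

Lemma good_n (R : realType) (A th : R) : A < 0 -> th < A^-1 -> good R A th (-1).
Proof.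
move=> A0 thA; split; first by right.
have hA : A * A^-1 = 1 by rewrite mulfV // lt_eqF.
have Ai : A^-1 < 0 by rewrite invr_lt0.
have h1 : 1 < th * A by nra.
exists (th * A - 1); split; first lra.
exists (- A / (th * A - 1)) => x xA; split.
  by rewrite mulN1r opprB; nra.
rewrite ler0_norm; last lra.
rewrite mulrAC ler_pdivlMr; last lra.
rewrite mulN1r opprB; nra.
Qed.

Theorem proposition3p5 (R : realType) (nu : probability R R)
  (hnd : non_dirac nu)
  (hub : has_ubound (msupport nu))
  (hA : sup (msupport nu) < 0) :
  (forall s t : R, 0 < s -> s < t -> kfun nu s < kfun nu t) /\
  (forall s t : R, s < t -> t < (sup (msupport nu))^-1 -> kfun nu s < kfun nu t).
Proof.
set A := sup (msupport nu) in hA *.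
have ns : forall y, A < y -> exists2 e : R, 0 < e & nu `]y - e, y + e[%classic = 0%E.
  move=> y Ay.
  have ny : ~ msupport nu y.
    by move=> /(ub_le_sup hub); rewrite -/A leNgt Ay.
  move: ny; rewrite /msupport /= => /existsNP [e /not_implyP [e0 h]].
  exists e => //; apply/eqP; rewrite -measure_le0 leNgt; exact/negP.
have t0 := @tail_null R nu A ns.
split.
- move=> s t s0 st; apply: (@kmono R nu A t0 hnd s t 1) => //.
  + exact: good_p.
  + by apply: good_p => //; lra.
- move=> s t st tA; apply: (@kmono R nu A t0 hnd s t (-1)) => //.
  + by apply: good_n => //; lra.
  + exact: good_n.
Qed.
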